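(* The determinant of $\mathbf T$ satisfies $$\det(\mathbf T)=\pm\,\beta_{-b}^{\binom{a+b-1}{a-1}}\,\beta_a^{\binom{a+b-1}{a}}$$ for some sign $\pm$; moreover exactly one bijection $\pi$ of the set of $a$-subsets of $[-b,a-1]$ to itself satisfies $\mathbf T[I,\pi(I)]\neq0$ for all $I$ whenever $\beta_{-b}\beta_a\ne0$, namely $\pi(I)=(I\cup\{a\})\setminus\{-b\}-1$ if $-b\in I$ and $\pi(I)=I-1$ if $-b\notin I$.
   Context: Let $S$ be a finite set of integers with $a:=\max S\ge 1$ and $b:=-\min S\ge 1$. Each $s\in S$ carries a weight $\omega_s$ in a field $K$ of characteristic $0$; set $\omega_s:=0$ for $s\in\mathbb Z\setminus S$, and for $s\in\mathbb Z$ put $\beta_s:=\delta_{s,0}-\omega_s$. Notation: $[m,n]:=\{i\in\mathbb Z: m\le i\le n\}$, $X+c:=\{x+c:x\in X\}$ (and $X-c:=X+(-c)$); an $n$-subset is a subset of cardinality $n$. For a finite set $I\subseteq\mathbb Z$ and $s\in\mathbb Z$, $\epsilon_s(I):=(-1)^{\#\{i\in I:\ i<s\}}$. $\mathbf T$ is the square matrix with rows and columns indexed by the $a$-subsets of $[-b,a-1]$ and entries $\mathbf T[I,J]:=\epsilon_s(I)\beta_s$ if there is an integer $s$ with $I\cup\{a\}=(J+1)\cup\{s\}$ (such $s$ is then unique), and $\mathbf T[I,J]:=0$ otherwise. *)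

(* Defs.v *)
From HB Require Import structures.
From mathcomp Require Import all_boot all_order all_algebra all_fingroup.
From Stdlib Require Import ClassicalEpsilon.
Set Implicit Arguments. Unset Strict Implicit. Unset Printing Implicit Defensive.
Import Order.TTheory GRing.Theory Num.Theory.
Local Open Scope ring_scope.

Definition omega (K : fieldType) (S : seq int) (w : int -> K) (s : int) : K :=
  if s \in S then w s else 0.
Definition beta (K : fieldType) (S : seq int) (w : int -> K) (s : int) : K :=
  (s == 0)%:R - omega S w s.

(* a-subsets of [-b, a-1]: element i : 'I_(a+b) encodes the integer i - b. *)
Definition asub (a b : nat) := {A : {set 'I_(a + b)} | #|A| == a}.

Definition intmem (a b : nat) (I : asub a b) (x : int) : bool :=
  [exists i in val I, (i%:Z - b%:Z == x)].

Definition epsI (K : fieldType) (a b : nat) (s : int) (I : asub a b) : K :=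
  (-1) ^+ #|[set i in val I | (i%:Z - b%:Z < s)%R]|.

(* I \cup {a} = (J + 1) \cup {s}, as sets of integers *)
Definition Trel (a b : nat) (I J : asub a b) (s : int) : Prop :=
  forall x : int, (intmem I x || (x == a%:Z)) = (intmem J (x - 1) || (x == s)).

Definition Tentry (K : fieldType) (S : seq int) (w : int -> K) (a b : nat)
    (I J : asub a b) : K :=
  match excluded_middle_informative (exists s : int, Trel I J s) with
  | left H => let s := proj1_sig (constructive_indefinite_description _ H) in
              epsI K s I * beta S w s
  | right _ => 0
  end.

Definition Tmat (K : fieldType) (S : seq int) (w : int -> K) (a b : nat)
    : 'M[K]_#|{: asub a b}| :=
  \matrix_(i, j) Tentry S w (enum_val i) (enum_val j).

(* Main.v *)
Require Import Defs.
From HB Require Import structures.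
From mathcomp Require Import all_boot all_order all_algebra all_fingroup.
From Stdlib Require Import ClassicalEpsilon.
From mathcomp Require Import zify.
Import Order.TTheory GRing.Theory Num.Theory.
Local Open Scope ring_scope.
Set Implicit Arguments. Unset Strict Implicit. Unset Printing Implicit Defensive.

Definition pm (n : nat) (X : {set 'I_n}) (p : nat) : bool :=
  [exists i in X, nat_of_ord i == p].

Lemma pm_ord n (X : {set 'I_n}) (i : 'I_n) : pm X i = (i \in X).
Proof.
apply/existsP/idP => [[j /andP[Hj /eqP E]]|Hi].
  by have -> : i = j by apply: val_inj.
by exists i; rewrite Hi eqxx.
Qed.

Lemma pm_lt n (X : {set 'I_n}) p : pm X p -> (p < n)%N.
Proof. by case/existsP => j /andP[_ /eqP <-]. Qed.

Lemma pm_set n (P : pred nat) q :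
  pm [set i : 'I_n | P i] q = (q < n)%N && P q.
Proof.
apply/idP/idP => [H|/andP[Hq Pq]].
  have Hq := pm_lt H.
  by move: H; rewrite -[q]/(nat_of_ord (Ordinal Hq)) pm_ord inE Hq.
by rewrite -[q]/(nat_of_ord (Ordinal Hq)) pm_ord inE.
Qed.

Definition Ap n (X : {set 'I_n}) p := pm X p || (p == n).
Definition Bp n (Y : {set 'I_n}) p := (0 < p)%N && pm Y p.-1.

Lemma intmem_pos a b (I : asub a b) (p : nat) :
  intmem I (p%:Z - b%:Z) = pm (val I) p.
Proof.
apply/existsP/existsP => [[i /andP[Hi /eqP E]]|[i /andP[Hi /eqP E]]];
  exists i; rewrite Hi /=; apply/eqP; lia.
Qed.

Lemma intmem_neg a b (I : asub a b) (x : int) :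
  x < - b%:Z -> intmem I x = false.
Proof.
move=> hx; apply/existsP => [[i /andP[_ /eqP E]]]; lia.
Qed.

Lemma intmem_shift a b (I : asub a b) (p : nat) :
  intmem I (p%:Z - b%:Z - 1) = Bp (val I) p.
Proof.
rewrite /Bp; case: p => [|q].
  by rewrite intmem_neg //; lia.
have -> : (q.+1)%:Z - b%:Z - 1 = q%:Z - b%:Z by lia.
by rewrite intmem_pos.
Qed.

Lemma eqZs (p q b : nat) : ((p%:Z - b%:Z) == (q%:Z - b%:Z)) = (p == q)%N.
Proof. by apply/eqP/eqP; lia. Qed.

Lemma Trel_pos a b (I J : asub a b) s : Trel I J s ->
  exists t : nat, [/\ s = t%:Z - b%:Z, (t <= a + b)%N &
     forall p, Ap (val I) p = Bp (val J) p || (p == t)].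
Proof.
move=> H.
have Hs := H s; rewrite eqxx orbT in Hs.
have [t [E Ht]] : exists t : nat, s = t%:Z - b%:Z /\ (t <= a + b)%N.
  case/orP: Hs => [/existsP[i /andP[_ /eqP E]]|/eqP E].
    exists i; split; first by rewrite E.
    by apply: ltnW.
  by exists (a + b)%N; split => //; lia.
exists t; split => // p.
have := H (p%:Z - b%:Z).
rewrite intmem_pos intmem_shift E eqZs.
have -> : (a%:Z) = (a + b)%N%:Z - b%:Z by lia.
by rewrite eqZs.
Qed.

Lemma pos_Trel a b (I J : asub a b) (t : nat) : (t <= a + b)%N ->
  (forall p, Ap (val I) p = Bp (val J) p || (p == t)) ->
  Trel I J (t%:Z - b%:Z).
Proof.
move=> Ht H x.
case: (ltrP x (- b%:Z)) => hx.
  rewrite !intmem_neg //; last lia.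
  have -> : (x == a%:Z) = false by apply/eqP; lia.
  by have -> : (x == t%:Z - b%:Z) = false by apply/eqP; lia.
have -> : x = (absz (x + b%:Z))%:Z - b%:Z by lia.
rewrite intmem_pos intmem_shift eqZs.
have -> : (a%:Z) = (a + b)%N%:Z - b%:Z by lia.
rewrite eqZs; exact: H.
Qed.

Local Open Scope nat_scope.

Lemma sum_pm n (X : {set 'I_n}) (G : nat -> nat) :
  \sum_(p < n) pm X p * G p = \sum_(i in X) G i.
Proof.
rewrite [RHS]big_mkcond /=; apply: eq_bigr => i _.
by rewrite pm_ord; case: (i \in X); rewrite ?mul1n ?mul0n.
Qed.

Lemma sumA n (X : {set 'I_n}) (G : nat -> nat) :
  \sum_(p < n.+1) Ap X p * G p = \sum_(i in X) G i + G n.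
Proof.
rewrite big_ord_recr /= -sum_pm; congr (_ + _).
  by apply: eq_bigr => i _ /=; rewrite /Ap (ltn_eqF (ltn_ord i)) orbF.
rewrite /Ap eqxx orbT mul1n //.
Qed.

Lemma sumB n (Y : {set 'I_n}) (G : nat -> nat) :
  \sum_(p < n.+1) Bp Y p * G p = \sum_(i in Y) G i.+1.
Proof.
rewrite big_ord_recl /= /Bp /= add0n -(sum_pm Y (fun i => G i.+1)).
by apply: eq_bigr => i _; rewrite add0n /bump leq0n add1n.
Qed.

Lemma sum_eqt (m t : nat) (G : nat -> nat) :
  \sum_(p < m) (nat_of_ord p == t) * G p = (t < m) * G t.
Proof.
elim: m => [|m IH]; first by rewrite big_ord0.
rewrite big_ord_recr /= IH.
case: (ltngtP t m) => h.
- by rewrite ltnS (ltnW h) mul0n addn0.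
- by rewrite ltnS leqNgt h /= !mul0n.
- by rewrite h ltnSn mul0n add0n.
Qed.

Lemma rel_sum n (X Y : {set 'I_n}) t : t <= n ->
  (forall p, Ap X p = Bp Y p || (p == t)) -> ~~ Bp Y t ->
  forall G : nat -> nat, \sum_(i in X) G i + G n = \sum_(i in Y) G i.+1 + G t.
Proof.
move=> Ht H nB G.
rewrite -sumA -sumB.
have -> : G t = (t < n.+1) * G t by rewrite ltnS Ht mul1n.
rewrite -sum_eqt -big_split /=; apply: eq_bigr => p _.
rewrite H -mulnDl; congr (_ * _).
case E: (nat_of_ord p == t); last by rewrite orbF addn0.
by move/eqP: E => ->; rewrite (negbTE nB).
Qed.

Lemma rel_card n (X Y : {set 'I_n}) :
  (forall p, Ap X p = Bp Y p) -> #|X| + 1 = #|Y|.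
Proof.
move=> H.
rewrite -!sum1_card -(sumA X (fun=> 1)) -(sumB Y (fun=> 1)).
by apply: eq_bigr => p _; rewrite H.
Qed.

Definition sumpos n (X : {set 'I_n}) := \sum_(i in X) (i : nat).

Lemma rel_sumpos n (X Y : {set 'I_n}) t : t <= n ->
  (forall p, Ap X p = Bp Y p || (p == t)) -> ~~ Bp Y t ->
  sumpos X + n = sumpos Y + #|Y| + t.
Proof.
move=> Ht H nB; rewrite /sumpos (rel_sum Ht H nB (fun i => i)).
by rewrite -sum1_card -big_split /=; under [in RHS]eq_bigr do rewrite addn1.
Qed.

Lemma rel_cardeq n (X Y : {set 'I_n}) t : t <= n ->
  (forall p, Ap X p = Bp Y p || (p == t)) -> ~~ Bp Y t -> #|X| = #|Y|.
Proof.
move=> Ht H nB; have := rel_sum Ht H nB (fun=> 1).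
by rewrite -!sum1_card => /addIn.
Qed.

Lemma rel_notB n (X Y : {set 'I_n}) t : 
  (forall p, Ap X p = Bp Y p || (p == t)) -> #|X| = #|Y| -> ~~ Bp Y t.
Proof.
move=> H E; apply/negP => Bt.
have H' : forall p, Ap X p = Bp Y p.
  by move=> p; rewrite H; case: eqP => [->|]; rewrite ?orbF ?Bt.
have := rel_card H'; rewrite E; lia.
Qed.

Definition t0 a b (I : asub a b) : nat := if pm (val I) 0 then 0 else a + b.
Definition J0set a b (I : asub a b) : {set 'I_(a+b)} :=
  [set q : 'I_(a+b) | Ap (val I) q.+1 && (q.+1 != t0 I)].

Lemma t0_le a b (I : asub a b) : t0 I <= a + b.
Proof. by rewrite /t0; case: pm. Qed.

Lemma Ap_le n (X : {set 'I_n}) p : Ap X p -> p <= n.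
Proof. by case/orP => [/pm_lt/ltnW|/eqP ->]. Qed.

Lemma J0_B a b (I : asub a b) p :
  Bp (J0set I) p = [&& 0 < p, Ap (val I) p & p != t0 I].
Proof.
rewrite /Bp; case: p => [|q] //=.
rewrite (pm_set _ (fun x => Ap (val I) x.+1 && (x.+1 != t0 I))).
case: (boolP (Ap (val I) q.+1)) => h /=; last by rewrite andbF.
by rewrite (Ap_le h).
Qed.

Lemma J0_rel a b (I : asub a b) p :
  Ap (val I) p = Bp (J0set I) p || (p == t0 I).
Proof.
rewrite J0_B; case: (eqVneq p (t0 I)) => [->|ne].
  rewrite orbT /t0; case h: (pm (val I) 0); first by rewrite /Ap h.
  by rewrite /Ap eqxx orbT.
rewrite /= orbF andbT; case: p ne => [|q] ne //=.
move: ne; rewrite /Ap /t0; case h: (pm (val I) 0) => //=.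
by move=> ne; apply/negbTE.
Qed.

Lemma J0_notB a b (I : asub a b) : ~~ Bp (J0set I) (t0 I).
Proof. by rewrite J0_B eqxx !andbF. Qed.

Lemma J0_card a b (I : asub a b) : #|J0set I| == a.
Proof.
by rewrite -(rel_cardeq (t0_le I) (@J0_rel a b I) (J0_notB I)) (valP I).
Qed.

Definition pi0f a b (I : asub a b) : asub a b := exist _ (J0set I) (J0_card I).

Lemma pi0_Trel a b (I : asub a b) : Trel I (pi0f I) ((t0 I)%:Z - b%:Z)%R.
Proof. apply: pos_Trel; [exact: t0_le | exact: J0_rel]. Qed.

Lemma pi0_sum a b (I : asub a b) :
  sumpos (val I) + (a + b) = sumpos (val (pi0f I)) + a + t0 I.
Proof.
rewrite (rel_sumpos (t0_le I) (@J0_rel a b I) (J0_notB I)).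
by rewrite (eqP (J0_card I)).
Qed.

Lemma Ap_ord n (X : {set 'I_n}) (q : 'I_n) : Ap X q = (q \in X).
Proof. by rewrite /Ap (ltn_eqF (ltn_ord q)) orbF pm_ord. Qed.

Lemma t0_B a b (I : asub a b) : 0 < a + b ->
  t0 I = if Bp (J0set I) (a + b) then 0 else a + b.
Proof.
move=> hn; rewrite J0_B hn /Ap (eqxx (a + b)) orbT /= /t0.
by case: pm => //=; rewrite ?(eqxx (a + b)) // -lt0n hn.
Qed.

Lemma pi0_inj a b : 0 < a + b -> injective (@pi0f a b).
Proof.
move=> hn I1 I2 E.
have EJ : J0set I1 = J0set I2 by have := congr1 val E.
have Et : t0 I1 = t0 I2 by rewrite (t0_B I1 hn) (t0_B I2 hn) EJ.
apply: val_inj; apply/setP => q.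
by rewrite -!Ap_ord !J0_rel EJ Et.
Qed.

Lemma Trel_full a b (I J : asub a b) s : Trel I J s ->
  exists t, [/\ s = (t%:Z - b%:Z)%R, t <= a + b,
     forall p, Ap (val I) p = Bp (val J) p || (p == t),
     ~~ Bp (val J) t & sumpos (val I) + (a + b) = sumpos (val J) + a + t].
Proof.
case/Trel_pos => t [Es Ht H].
have nB : ~~ Bp (val J) t.
  by apply: (rel_notB H); rewrite (eqP (valP I)) (eqP (valP J)).
exists t; split => //.
by rewrite (rel_sumpos Ht H nB) (eqP (valP J)).
Qed.

Lemma t_le_t0 a b (I J : asub a b) t : t <= a + b ->
  (forall p, Ap (val I) p = Bp (val J) p || (p == t)) -> t <= t0 I.
Proof.
move=> Ht H; rewrite /t0; case h: (pm (val I) 0) => //.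
have := H 0; rewrite /Ap h /= /Bp /=.
by move/esym/eqP => <-.
Qed.

Lemma sum_t_gen a b (f : asub a b -> asub a b) (tt : asub a b -> nat) :
  injective f ->
  (forall I, sumpos (val I) + (a + b) = sumpos (val (f I)) + a + tt I) ->
  \sum_I tt I = #|{: asub a b}| * b.
Proof.
move=> finj H.
have R : \sum_(I : asub a b) sumpos (val (f I)) = \sum_(I : asub a b) sumpos (val I).
  by rewrite [in RHS](reindex_inj finj).
have E : \sum_(I : asub a b) (sumpos (val I) + (a + b)) = \sum_(I : asub a b) (sumpos (val (f I)) + a + tt I).
  by apply: eq_bigr => I _; rewrite H.
move: E; rewrite !big_split /= R !sum_nat_const.
set X := \sum_(I : asub a b) sumpos (val I).
move: (#|_|) => N; lia.
Qed.

Lemma Bp_ord n (Y : {set 'I_n}) (q : 'I_n) : Bp Y q.+1 = (q \in Y).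
Proof. by rewrite /Bp /= pm_ord. Qed.

Lemma uniq_match a b (f : asub a b -> asub a b) : 0 < a + b -> injective f ->
  (forall I, exists s, Trel I (f I) s) -> forall I, f I = pi0f I.
Proof.
move=> hn finj HT.
pose tt I := (sumpos (val I) + (a + b)) - (sumpos (val (f I)) + a).
have Ht : forall I, exists t, [/\ tt I = t, t <= t0 I,
     forall p, Ap (val I) p = Bp (val (f I)) p || (p == t) & ~~ Bp (val (f I)) t].
  move=> I; have [s /Trel_full [t [_ Hle H nB Hs]]] := HT I.
  exists t; split => //; last exact: t_le_t0 Hle H.
  rewrite /tt Hs; lia.
have Hs : forall I, sumpos (val I) + (a + b) = sumpos (val (f I)) + a + tt I.
  move=> I; have [s /Trel_full [t' [_ _ _ _ Hs']]] := HT I.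
  rewrite /tt; lia.
have S1 := sum_t_gen finj Hs.
have S2 := sum_t_gen (pi0_inj hn) (@pi0_sum a b).
have Hle : forall I, tt I <= t0 I by move=> I; have [t [-> ? _ _]] := Ht I.
have Heq : forall I, tt I = t0 I.
  have : \sum_(I : asub a b) (t0 I - tt I) == 0 by rewrite sumnB // S1 S2 subnn.
  rewrite sum_nat_eq0 => /forallP Z I.
  by apply/eqP; rewrite eqn_leq Hle /= -subn_eq0; exact: (Z I).
move=> I; have [t [Et _ H nB]] := Ht I.
rewrite Heq in Et; subst t.
apply: val_inj; apply/setP => q /=.
rewrite -!Bp_ord.
case: (eqVneq q.+1 (t0 I)) => [E|ne].
  by rewrite E (negbTE nB) (negbTE (J0_notB I)).
by have := H q.+1; have := J0_rel I q.+1; rewrite (negbTE ne) !orbF => <- <-.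
Qed.

Local Open Scope ring_scope.

Definition s0 a b (I : asub a b) : int := (t0 I)%:Z - b%:Z.

Lemma Tentry_Trel (K : fieldType) S (w : int -> K) a b (I J : asub a b) :
  Tentry S w I J != 0 -> exists s, Trel I J s.
Proof.
rewrite /Tentry; case: excluded_middle_informative => // _.
by rewrite eqxx.
Qed.

Lemma Tentry_pi0 (K : fieldType) S (w : int -> K) a b (I : asub a b) :
  Tentry S w I (pi0f I) = epsI K (s0 I) I * beta S w (s0 I).
Proof.
rewrite /Tentry; case: excluded_middle_informative => [H|H]; last first.
  by exfalso; apply: H; exists (s0 I); exact: pi0_Trel.
case: (constructive_indefinite_description _ H) => s Hs /=.
have [t [-> _ _ _ Hsum]] := Trel_full Hs.
have := pi0_sum I; rewrite Hsum => /eqP; rewrite eqn_add2l => /eqP ->.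
by [].
Qed.

Lemma intmem_mb a b (I : asub a b) : intmem I (- b%:Z) = pm (val I) 0.
Proof. by rewrite -intmem_pos sub0r. Qed.

Lemma eq_mb (p b : nat) : ((p%:Z - b%:Z) == - b%:Z) = (p == 0)%N.
Proof. by apply/eqP/eqP; lia. Qed.

Lemma eq_a (p a b : nat) : ((p%:Z - b%:Z) == a%:Z) = (p == a + b)%N.
Proof. by apply/eqP/eqP; lia. Qed.

Lemma pi0_intmem a b (I : asub a b) (y : int) :
  intmem (pi0f I) (y - 1) =
  (if intmem I (- b%:Z) then (intmem I y || (y == a%:Z)) && (y != - b%:Z)
   else intmem I y).
Proof.
rewrite intmem_mb.
case: (ltrP y (- b%:Z)) => hy.
  rewrite !intmem_neg //; last lia.
  have -> : (y == a%:Z) = false by apply/eqP; lia.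
  by case: pm.
have -> : y = (absz (y + b%:Z))%:Z - b%:Z by lia.
move: (absz _) => p.
rewrite intmem_shift intmem_pos eq_mb eq_a /= J0_B /t0 /Ap.
case h: (pm (val I) 0) => /=.
  by case: p => [|q] //=; rewrite andbF.
case: p => [|q] /=; first by rewrite h.
case e: (q.+1 == a + b)%N => /=; last by rewrite orbF andbT.
rewrite andbF; apply/esym/negbTE/negP => /pm_lt.
by rewrite (eqP e) ltnn.
Qed.

Lemma card_asub a b : #|{: asub a b}| = 'C(a + b, a).
Proof.
rewrite card_sig; have := card_draws ('I_(a + b)) a; rewrite card_ord => <-.
by apply: eq_card => A; rewrite !inE.
Qed.

Lemma sum_t0 a b : (0 < a + b)%N ->
  (\sum_(I : asub a b) t0 I = #|[pred I : asub a b | ~~ pm (val I) 0]| * (a + b))%N.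
Proof.
move=> hn.
rewrite (bigID (fun I : asub a b => pm (val I) 0)) /= big1; last first.
  by move=> I h; rewrite /t0 h.
rewrite add0n -sum_nat_const.
apply: eq_big => I; first by rewrite !inE.
by rewrite /t0 => /negbTE ->.
Qed.

Lemma count1 a b : (1 <= a)%N -> (1 <= b)%N ->
  #|[pred I : asub a b | ~~ pm (val I) 0]| = 'C(a + b - 1, a).
Proof.
move=> ha hb; have hn : (0 < a + b)%N by lia.
have E := sum_t_gen (pi0_inj hn) (@pi0_sum a b).
rewrite sum_t0 // card_asub in E.
have M := mul_bin_down (a + b) a.
rewrite addKn -subn1 in M.
apply/eqP; rewrite -(eqn_pmul2r hn) E; apply/eqP.
by rewrite [RHS]mulnC M mulnC.
Qed.

Lemma count0 a b : (1 <= a)%N -> (1 <= b)%N ->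
  #|[pred I : asub a b | pm (val I) 0]| = 'C(a + b - 1, a - 1).
Proof.
move=> ha hb.
have C := cardC [pred I : asub a b | pm (val I) 0].
have C1 : #|[predC [pred I : asub a b | pm (val I) 0]]| = 'C(a + b - 1, a).
  by rewrite -(count1 ha hb); apply: eq_card => I; rewrite !inE.
rewrite C1 card_asub in C.
have P : 'C(a + b, a) = ('C(a + b - 1, a) + 'C(a + b - 1, a - 1))%N.
  case: a ha {C C1} => // a' _.
  by rewrite addSn subn1 /= subn1 /= binS.
by apply/eqP; rewrite -(eqn_add2r 'C(a + b - 1, a)) C P addnC.
Qed.

Lemma sign_prod (K : fieldType) (T : finType) (P : pred T) (F : T -> K) :
  (forall i, exists e : bool, F i = (-1) ^+ e) ->
  exists e : bool, \prod_(i in P) F i = (-1) ^+ e.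
Proof.
move=> H.
apply: (big_ind (fun x => exists e : bool, x = (-1) ^+ e)).
- by exists false.
- by move=> x y [e1 ->] [e2 ->]; exists (e1 (+) e2); rewrite signr_addb.
- by move=> i _; exact: H.
Qed.

Lemma epsI_sign (K : fieldType) a b s (I : asub a b) :
  exists e : bool, epsI K s I = (-1) ^+ e.
Proof. by exists (odd #|[set i in val I | (i%:Z - b%:Z < s)%R]|); rewrite signr_odd. Qed.

Lemma s0_val a b (I : asub a b) :
  s0 I = if pm (val I) 0 then - b%:Z else a%:Z.
Proof. by rewrite /s0 /t0; case: pm; rewrite ?sub0r //; lia. Qed.

Lemma prod_beta (K : fieldType) S (w : int -> K) a b :
  \prod_(I in {: asub a b}) beta S w (s0 I) =
  beta S w (- b%:Z) ^+ #|[pred I : asub a b | pm (val I) 0]| *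
  beta S w a%:Z ^+ #|[pred I : asub a b | ~~ pm (val I) 0]|.
Proof.
rewrite (bigID (fun I : asub a b => pm (val I) 0)) /=.
rewrite -!prodr_const; congr (_ * _); apply: eq_big => I; rewrite ?inE //;
  by rewrite s0_val => h; rewrite ?(negbTE h) ?h.
Qed.

Definition pi0p a b (h : (0 < a + b)%N) : {perm asub a b} := perm (pi0_inj h).

Unset Implicit Arguments.
Theorem mainTheorem6 (K : fieldType) (S : seq int) (w : int -> K) (a b : nat) :
  [pchar K] =i pred0 ->
  (1 <= a)%N -> (1 <= b)%N ->
  a%:Z \in S -> - b%:Z \in S ->
  (forall s, s \in S -> - b%:Z <= s <= a%:Z) ->
  (exists e : bool,
     \det (Tmat S w a b) =
       (-1) ^+ e * beta S w (- b%:Z) ^+ 'C(a + b - 1, a - 1)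
                 * beta S w a%:Z ^+ 'C(a + b - 1, a))
  /\
  (beta S w (- b%:Z) * beta S w a%:Z != 0 ->
     (exists pi : {perm (asub a b)}, forall I, Tentry S w I (pi I) != 0)
     /\
     (forall pi : {perm (asub a b)}, (forall I, Tentry S w I (pi I) != 0) ->
        forall (I : asub a b) (x : int),
          intmem (pi I) x =
            (if intmem I (- b%:Z)
             then (intmem I (x + 1) || (x + 1 == a%:Z)) && (x + 1 != - b%:Z)
             else intmem I (x + 1)))).
Proof.
move=> _ ha hb _ _ _.
have hn : (0 < a + b)%N by lia.
split; last first.
  move=> hbeta; split.
    exists (pi0p hn) => I; rewrite permE Tentry_pi0.
    have [e ->] := epsI_sign K (s0 I) I.
    rewrite mulf_eq0 negb_or signr_eq0 /=.
    move: hbeta; rewrite mulf_eq0 negb_or => /andP[h1 h2].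
    by rewrite s0_val; case: pm.
  move=> pi Hpi I x.
  have Hu := uniq_match hn (@perm_inj _ pi) (fun I => Tentry_Trel (Hpi I)).
  by rewrite Hu -[in LHS](addrK 1 x) pi0_intmem.
pose g := fun i : 'I_#|{: asub a b}| => enum_rank (pi0f (enum_val i)).
have ginj : injective g.
  move=> i j /enum_rank_inj /(pi0_inj hn) /enum_val_inj; exact.
pose sig0 : 'S_#|{: asub a b}| := perm ginj.
rewrite /determinant (bigD1 sig0) //= [X in _ + X]big1 ?addr0; last first.
  move=> sg nsg; apply/eqP; rewrite mulf_eq0; apply/orP; right.
  case: (boolP [exists i, Tmat S w a b i (sg i) == 0]) => [/existsP[i Hi]|/existsPn Hall].
    by apply/prodf_eq0; exists i.
  exfalso; apply/negP: nsg; rewrite negbK.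
  pose f := fun I : asub a b => enum_val (sg (enum_rank I)).
  have finj : injective f.
    by move=> I J /enum_val_inj /perm_inj /enum_rank_inj.
  have HT : forall I, exists s, Trel I (f I) s.
    move=> I; apply: (Tentry_Trel (S := S) (w := w)).
    by have := Hall (enum_rank I); rewrite mxE enum_rankK.
  have Hu := uniq_match hn finj HT.
  apply/eqP/permP => i; rewrite permE /g -Hu /f enum_valK.
  by rewrite enum_valK.
have E1 : \prod_i Tmat S w a b i (sig0 i) =
          \prod_(I in {: asub a b}) (epsI K (s0 I) I * beta S w (s0 I)).
  rewrite (big_enum_val (A := {: asub a b})) /=.
  by apply: eq_bigr => i _; rewrite mxE permE /g enum_rankK Tentry_pi0.
rewrite E1 big_split /= prod_beta (count0 ha hb) (count1 ha hb).
have [e ->] := sign_prod {: asub a b} (fun I => epsI_sign K (s0 I) I).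
exists ((odd_perm sig0) (+) e).
by rewrite signr_addb !mulrA.
Qed.
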